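(* Let $\mathbf{S}\subset\mathbb{R}^2$ be the unit circle centered at the origin. Let $0\le \alpha_1<\alpha_2<\alpha_3<\alpha_4< \pi$ and set $A_i=(\cos 2\alpha_i,\sin 2\alpha_i)\in\mathbf{S}$ for $1\le i\le 4$ (so $A_1,A_2,A_3,A_4$ are distinct and arranged counterclockwise). For each $i$, let $H_i$ be a Euclidean circle of radius $r_i$ (with $0<r_i<1$) contained in the closed unit disk and tangent to $\mathbf{S}$ from the inside at $A_i$, and assume $H_i\cap H_j=\varnothing$ for all $i\neq j$. For $1\le i<j\le 4$ define: - $d_{ij}$ = the Euclidean distance between $A_i$ and $A_j$; - $t_{ij}$ = the length of the exterior common tangent segment to $H_i$ and $H_j$ (the common tangent drawn so that both circles lie on the same side of it), measured between the two points of tangency; - $\lambda_{ij}=e^{\delta_{ij}/2}$, where $\delta_{ij}$ is defined as follows: regard the open unit disk as the Poincaré disk model of the hyperbolic plane, with metric $ds^2=4(dx^2+dy^2)/(1-x^2-y^2)^2$, so that $H_i$ is a horocycle centered at the ideal point $A_i$; let $\gamma_{ij}$ be the hyperbolic geodesic with ideal endpoints $A_i$ and $A_j$; then $\delta_{ij}$ is the hyperbolic distance along $\gamma_{ij}$ between the points $H_i\cap\gamma_{ij}$ and $H_j\cap\gamma_{ij}$; - $P_{ij}=\det\begin{bmatrix}\cos\alpha_i & \cos\alpha_j\\ \sin\alpha_i & \sin\alpha_j\end{bmatrix}$. Then for all $1\le i<j\le 4$: $$t_{ij}=\sqrt{1-r_i}\,\sqrt{1-r_j}\,d_{ij},\qquad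 t_{ij}=\lambda_{ij}\sqrt{2r_i}\,\sqrt{2r_j},\qquad d_{ij}=2P_{ij}.$$
   Context: Here $H_i\cap\gamma_{ij}$ denotes the single point where the geodesic $\gamma_{ij}$ (a circular arc or diameter orthogonal to $\mathbf{S}$) meets the horocycle $H_i$ other than the ideal point $A_i$ itself. *)

(* Defs.v *)
From Stdlib Require Import Reals Lra.
Open Scope R_scope.

Definition pt := (R * R)%type.

Definition dot (u v : pt) : R := fst u * fst v + snd u * snd v.
Definition psub (u v : pt) : pt := (fst u - fst v, snd u - snd v).
Definition norm (u : pt) : R := sqrt (dot u u).
Definition edist (u v : pt) : R := norm (psub u v).
Definition det2 (u v : pt) : R := fst u * snd v - snd u * fst v.

Definition idealpt (a : R) : pt := (cos (2 * a), sin (2 * a)).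

Definition on_circle (c : pt) (r : R) (p : pt) : Prop := edist p c = r.

(* p, q are the points of tangency of an exterior common tangent line of the
   circles (c1,r1), (c2,r2): the line {x | n.x = b} (n a unit normal) passes
   through p in the first circle and q in the second, and both circles lie in
   the same closed half-plane {x | n.x <= b}. *)
Definition ext_tangent_pts (c1 : pt) (r1 : R) (c2 : pt) (r2 : R) (p q : pt)
  : Prop :=
  exists (n : pt) (b : R),
    dot n n = 1 /\
    on_circle c1 r1 p /\ on_circle c2 r2 q /\
    dot n p = b /\ dot n q = b /\
    (forall x, on_circle c1 r1 x -> dot n x <= b) /\
    (forall x, on_circle c2 r2 x -> dot n x <= b).

(* Points of the hyperbolic geodesic (Poincare disk) with ideal endpoints A, B:
   points of the open unit disk lying either on a Euclidean circle through A, B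
   orthogonal to the unit circle, or (when A, B are antipodal) on the diameter AB. *)
Definition on_geodesic (A B : pt) (x : pt) : Prop :=
  dot x x < 1 /\
  ((exists c : pt,
      edist c A = edist c B /\ dot c c = 1 + (edist c A) ^ 2 /\
      edist x c = edist c A)
   \/ (fst A + fst B = 0 /\ snd A + snd B = 0 /\ det2 x A = 0)).

Definition arcosh (x : R) : R := ln (x + sqrt (x ^ 2 - 1)).

(* Hyperbolic distance in the Poincare disk model with metric
   ds^2 = 4 (dx^2 + dy^2) / (1 - x^2 - y^2)^2. *)
Definition hdist (u v : pt) : R :=
  arcosh (1 + 2 * (edist u v) ^ 2 / ((1 - dot u u) * (1 - dot v v))).

(* Main.v *)
Require Import Defs.
From Stdlib Require Import Reals Lra Psatz Lia.
Open Scope R_scope.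

Lemma edist_sq (u v : pt) : edist u v ^ 2 = (fst u - fst v)^2 + (snd u - snd v)^2.
Proof. unfold edist, norm. rewrite pow2_sqrt. all: unfold dot, psub; simpl. ring. apply Rplus_le_le_0_compat; apply Rle_0_sqr. Qed.

Lemma edist_nonneg (u v : pt) : 0 <= edist u v.
Proof. apply sqrt_pos. Qed.

Lemma circ_sq c r p : on_circle c r p -> (fst p - fst c)^2 + (snd p - snd c)^2 = r^2.
Proof. unfold on_circle; intros H; rewrite <- edist_sq, H; ring. Qed.

Lemma circ_of_sq c r p : 0 <= r -> (fst p - fst c)^2 + (snd p - snd c)^2 = r^2 -> on_circle c r p.
Proof. intros Hr H. unfold on_circle, edist, norm, dot, psub; simpl.
  replace ((fst p - fst c) * (fst p - fst c) + (snd p - snd c) * (snd p - snd c)) with (r^2) by (rewrite <- H; ring).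
  apply sqrt_pow2; auto. Qed.

Lemma sq0 x : x^2 = 0 -> x = 0.
Proof. intros H. destruct (Req_dec x 0); auto. exfalso; apply (pow_nonzero x 2); auto. Qed.

Lemma center a1 a2 r c1 c2 : a1^2 + a2^2 = 1 -> 0 < r < 1 ->
  (forall p, on_circle (c1,c2) r p -> norm p <= 1) -> on_circle (c1,c2) r (a1,a2) ->
  c1 = (1-r)*a1 /\ c2 = (1-r)*a2.
Proof.
  intros Ha Hr Hin HA. apply circ_sq in HA; simpl in HA.
  assert (Hpos : 0 < c1^2 + c2^2).
  { destruct (Rle_lt_dec (c1^2+c2^2) 0) as [h|h]; [|exact h].
    assert (c1 = 0) by nra. assert (c2 = 0) by nra. subst. nra. }
  set (n := sqrt (c1^2+c2^2)).
  assert (Hn2 : n^2 = c1^2+c2^2) by (apply pow2_sqrt; lra).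
  assert (Hn : 0 < n) by (apply sqrt_lt_R0; lra).
  assert (Hp := Hin (c1 + r/n*c1, c2 + r/n*c2)).
  assert (Hnr : n + r <= 1).
  { assert (E: norm (c1 + r/n*c1, c2 + r/n*c2) = n + r).
    { unfold norm, dot; simpl.
      replace ((c1 + r / n * c1) * (c1 + r / n * c1) + (c2 + r / n * c2) * (c2 + r / n * c2)) with ((1 + r/n)^2 * (c1^2+c2^2)) by ring.
      rewrite <- Hn2. replace ((1+r/n)^2*n^2) with ((n+r)^2) by (field; lra).
      apply sqrt_pow2; lra. }
    rewrite <- E. apply Hp. apply circ_of_sq; [lra|]. cbn [fst snd].
    replace ((c1 + r / n * c1 - c1) ^ 2 + (c2 + r / n * c2 - c2) ^ 2) with ((r/n)^2*(c1^2+c2^2)) by ring.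
    rewrite <- Hn2. field. lra. }
  assert (CS : (a1*c1+a2*c2)^2 <= n^2).
  { rewrite Hn2. assert (L : (a1*c1+a2*c2)^2 + (a1*c2-a2*c1)^2 = (a1^2+a2^2)*(c1^2+c2^2)) by ring.
    rewrite Ha in L. pose proof (pow2_ge_0 (a1*c2-a2*c1)). lra. }
  assert (Hac : a1*c1+a2*c2 <= n) by nra.
  assert (Hn1 : n = 1 - r) by nra.
  assert (Hz : (c1 - (1-r)*a1)^2 + (c2-(1-r)*a2)^2 = 0) by nra.
  pose proof (pow2_ge_0 (c1 - (1-r)*a1)). pose proof (pow2_ge_0 (c2 - (1-r)*a2)).
  split; apply Rminus_diag_uniq; apply sq0; lra.
Qed.

Lemma cs_unit n1 n2 w1 w2 r : n1*n1+n2*n2 = 1 -> w1^2+w2^2 = r^2 -> 0 <= r -> n1*w1 + n2*w2 <= r.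
Proof. intros Hn Hw Hr.
  assert (L : (n1*w1+n2*w2)^2 + (n1*w2-n2*w1)^2 = (n1*n1+n2*n2)*(w1^2+w2^2)) by ring.
  rewrite Hn, Hw in L. pose proof (pow2_ge_0 (n1*w2-n2*w1)).
  destruct (Rle_lt_dec (n1*w1+n2*w2) r); auto. nra. Qed.

Lemma tang_pt c1 c2 r n1 n2 b p1 p2 : 0 < r -> n1*n1+n2*n2 = 1 ->
  on_circle (c1,c2) r (p1,p2) -> n1*p1+n2*p2 = b ->
  (forall x, on_circle (c1,c2) r x -> dot (n1,n2) x <= b) ->
  p1 = c1 + r*n1 /\ p2 = c2 + r*n2 /\ b = n1*c1+n2*c2 + r.
Proof.
  intros Hr Hn Hp Hb Hall.
  assert (Hx := Hall (c1 + r*n1, c2 + r*n2)).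
  unfold dot in Hx; cbn [fst snd] in Hx.
  assert (Hle : n1*(c1 + r*n1) + n2*(c2+r*n2) <= b).
  { apply Hx. apply circ_of_sq; [lra|]. cbn [fst snd].
    replace ((c1 + r * n1 - c1) ^ 2 + (c2 + r * n2 - c2) ^ 2) with (r^2*(n1*n1+n2*n2)) by ring.
    rewrite Hn; ring. }
  apply circ_sq in Hp; cbn [fst snd] in Hp.
  assert (Hw : n1*(p1-c1)+n2*(p2-c2) <= r) by (apply cs_unit; auto; lra).
  assert (E : (p1 - c1 - r*n1)^2 + (p2-c2-r*n2)^2 = ((p1-c1)^2+(p2-c2)^2) - 2*r*(n1*(p1-c1)+n2*(p2-c2)) + r^2*(n1*n1+n2*n2)) by ring.
  rewrite Hp, Hn in E.
  assert (Hb2 : b = n1*c1+n2*c2 + r).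
  { assert (n1*(c1 + r*n1) + n2*(c2+r*n2) = n1*c1+n2*c2 + r*(n1*n1+n2*n2)) by ring. rewrite Hn in *. lra. }
  assert (Hw2 : n1*(p1-c1)+n2*(p2-c2) - r >= 0).
  { assert (n1*(c1 + r*n1) + n2*(c2+r*n2) = n1*c1+n2*c2 + r*(n1*n1+n2*n2)) by ring. rewrite Hn in *. lra. }
  assert (r*(n1*(p1-c1)+n2*(p2-c2) - r) >= 0) by (apply Rle_ge, Rmult_le_pos; lra).
  assert (Hz : (p1 - c1 - r*n1)^2 + (p2-c2-r*n2)^2 <= 0) by lra.
  pose proof (pow2_ge_0 (p1 - c1 - r*n1)). pose proof (pow2_ge_0 (p2 - c2 - r*n2)).
  split; [|split]; auto.
  - assert (p1 - c1 - r*n1 = 0) by (apply sq0; lra). lra.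
  - assert (p2 - c2 - r*n2 = 0) by (apply sq0; lra). lra.
Qed.

Lemma tangent_len c1 r1 c2 r2 p q : 0<r1 -> 0<r2 -> ext_tangent_pts c1 r1 c2 r2 p q ->
  edist p q ^2 = edist c1 c2 ^2 - (r1-r2)^2.
Proof.
  destruct c1 as [c11 c12], c2 as [c21 c22], p as [p1 p2], q as [q1 q2].
  intros H1 H2 [[n1 n2] [b [Hn [Hp [Hq [Hpb [Hqb [A1 A2]]]]]]]].
  unfold dot in *; cbn [fst snd] in *.
  destruct (tang_pt c11 c12 r1 n1 n2 b p1 p2) as [E1 [E2 E3]]; auto.
  destruct (tang_pt c21 c22 r2 n1 n2 b q1 q2) as [F1 [F2 F3]]; auto.
  rewrite !edist_sq; cbn [fst snd]. subst p1 p2 q1 q2.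
  assert (HD : n1*(c11-c21) + n2*(c12-c22) = r2 - r1) by lra.
  replace ((c11 + r1 * n1 - (c21 + r2 * n1)) ^ 2 + (c12 + r1 * n2 - (c22 + r2 * n2)) ^ 2)
    with ((c11 - c21)^2 + (c12-c22)^2 + 2*(r1-r2)*(n1*(c11-c21) + n2*(c12-c22)) + (r1-r2)^2*(n1*n1+n2*n2)) by ring.
  rewrite HD, Hn. ring.
Qed.

Lemma tangent_exists c1 r1 c2 r2 : 0<r1 -> 0<r2 -> 0 < edist c1 c2 ^2 ->
  (r1-r2)^2 <= edist c1 c2 ^2 -> exists p q, ext_tangent_pts c1 r1 c2 r2 p q.
Proof.
  destruct c1 as [c11 c12], c2 as [c21 c22]. rewrite edist_sq; cbn [fst snd].
  intros H1 H2 HL He.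
  set (L := (c11 - c21) ^ 2 + (c12 - c22) ^ 2) in *.
  set (D1 := c11 - c21). set (D2 := c12 - c22).
  set (e := r2 - r1). set (h := sqrt (L - e^2)).
  assert (Hh : h^2 = L - e^2) by (apply pow2_sqrt; unfold e; lra).
  set (n1 := (e*D1 - h*D2)/L). set (n2 := (e*D2 + h*D1)/L).
  assert (HLD : L = D1^2 + D2^2) by reflexivity.
  assert (Hn : n1*n1+n2*n2 = 1).
  { unfold n1, n2. replace ((e * D1 - h * D2) / L * ((e * D1 - h * D2) / L) + (e * D2 + h * D1) / L * ((e * D2 + h * D1) / L))
     with ((e^2 + h^2)*(D1^2+D2^2)/(L*L)) by (field; lra). rewrite Hh, <- HLD. field. lra. }
  assert (HnD : n1*D1 + n2*D2 = e).
  { unfold n1, n2. replace ((e * D1 - h * D2) / L * D1 + (e * D2 + h * D1) / L * D2) with (e*(D1^2+D2^2)/L) by (field; lra).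
    rewrite <- HLD. field. lra. }
  exists (c11 + r1*n1, c12 + r1*n2), (c21 + r2*n1, c22 + r2*n2).
  exists (n1,n2), (n1*c11+n2*c12 + r1).
  unfold dot; cbn [fst snd].
  split; [exact Hn|]. split; [|split; [|split; [|split; [|split]]]].
  - apply circ_of_sq; [lra|]; cbn [fst snd].
    replace ((c11 + r1 * n1 - c11) ^ 2 + (c12 + r1 * n2 - c12) ^ 2) with (r1^2*(n1*n1+n2*n2)) by ring. rewrite Hn; ring.
  - apply circ_of_sq; [lra|]; cbn [fst snd].
    replace ((c21 + r2 * n1 - c21) ^ 2 + (c22 + r2 * n2 - c22) ^ 2) with (r2^2*(n1*n1+n2*n2)) by ring. rewrite Hn; ring.
  - replace (n1 * (c11 + r1 * n1) + n2 * (c12 + r1 * n2)) with (n1*c11+n2*c12 + r1*(n1*n1+n2*n2)) by ring. rewrite Hn; ring.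
  - replace (n1 * (c21 + r2 * n1) + n2 * (c22 + r2 * n2)) with (n1*c11+n2*c12 - (n1*D1+n2*D2) + r2*(n1*n1+n2*n2)) by (unfold D1, D2; ring).
    rewrite Hn, HnD. unfold e; ring.
  - intros [x1 x2] Hx. apply circ_sq in Hx; cbn [fst snd] in *.
    assert (n1*(x1-c11)+n2*(x2-c12) <= r1) by (apply cs_unit; auto; lra). lra.
  - intros [x1 x2] Hx. apply circ_sq in Hx; cbn [fst snd] in *.
    assert (n1*(x1-c21)+n2*(x2-c22) <= r2) by (apply cs_unit; auto; lra).
    unfold D1, D2, e in HnD. lra.
Qed.

Lemma circles_meet c1 r1 c2 r2 : 0<r1 -> 0<r2 -> 0 < edist c1 c2 ^2 ->
  (r1-r2)^2 <= edist c1 c2 ^2 -> edist c1 c2 ^2 <= (r1+r2)^2 ->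
  exists p, on_circle c1 r1 p /\ on_circle c2 r2 p.
Proof.
  destruct c1 as [c11 c12], c2 as [c21 c22]. rewrite edist_sq; cbn [fst snd].
  intros H1 H2 HL He Hf.
  set (L := (c11 - c21) ^ 2 + (c12 - c22) ^ 2) in *.
  set (D1 := c21 - c11). set (D2 := c22 - c12).
  assert (HLD : L = D1^2 + D2^2) by (unfold L, D1, D2; ring).
  set (a := (L + r1^2 - r2^2)/2).
  assert (Hpos : 0 <= r1^2*L - a^2).
  { unfold a. replace (r1 ^ 2 * L - ((L + r1 ^ 2 - r2 ^ 2) / 2) ^ 2) with (- (L - (r1+r2)^2)*(L - (r1-r2)^2)/4) by field.
    nra. }
  set (h := sqrt (r1^2*L - a^2)).
  assert (Hh : h^2 = r1^2*L - a^2) by (apply pow2_sqrt; lra).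
  exists (c11 + (a*D1 - h*D2)/L, c12 + (a*D2 + h*D1)/L). split.
  - apply circ_of_sq; [lra|]; cbn [fst snd].
    replace ((c11 + (a * D1 - h * D2) / L - c11) ^ 2 + (c12 + (a * D2 + h * D1) / L - c12) ^ 2)
      with ((a^2+h^2)*(D1^2+D2^2)/(L*L)) by (field; lra).
    rewrite Hh, <- HLD. field. lra.
  - apply circ_of_sq; [lra|]; cbn [fst snd].
    replace ((c11 + (a * D1 - h * D2) / L - c21) ^ 2 + (c12 + (a * D2 + h * D1) / L - c22) ^ 2)
      with (((a-L)^2+h^2)*(D1^2+D2^2)/(L*L)) by (unfold D1, D2; field; lra).
    rewrite Hh, <- HLD. unfold a. field. lra.
Qed.

Definition NN s r := (1-s) + r^2*(1+s).
Definition UU s r := 1 - 2*(1-s)*r/NN s r.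
Definition WW s r := 2*r^2/NN s r.

Lemma NN_pos s r : -1 <= s < 1 -> 0 < NN s r.
Proof. intros. unfold NN. pose proof (pow2_ge_0 r). assert (0 <= r^2*(1+s)) by (apply Rmult_le_pos; lra). lra. Qed.

Lemma one_minus s r : -1 <= s < 1 ->
  1 - (UU s r)^2 - (1 - s^2) * (WW s r)^2 = 4*(1-s)*r*(1-r)/NN s r.
Proof. intros. pose proof (NN_pos s r H). unfold UU, WW in *. 
  unfold NN in *. field. lra. Qed.

Lemma dist_id s ri rj : -1 <= s < 1 ->
  (UU s ri - UU s rj * s - (1 - s^2) * WW s rj)^2 + (1-s^2)*(WW s ri - UU s rj + WW s rj * s)^2
  = 2*(1-s)*((1-ri)*(1-rj)*(1-s) - 2*ri*rj)^2/(NN s ri * NN s rj).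
Proof. intros. pose proof (NN_pos s ri H). pose proof (NN_pos s rj H). unfold UU, WW in *.
  unfold NN in *. field. lra. Qed.

Lemma alg1 s D r u v k : s^2+D^2=1 -> s<1 -> 0<r<1 -> k*D = 1-s ->
  (u-1)^2+v^2-2*k*v = 0 -> (u-(1-r))^2+v^2 = r^2 -> u^2+v^2<1 ->
  u = UU s r /\ v = D*WW s r.
Proof.
  intros HsD Hs Hr HkD E1 E2 Hu.
  assert (Hs1 : -1 <= s) by nra.
  pose proof (NN_pos s r (conj Hs1 Hs)) as HN.
  assert (F1 : r*(u-1) = -(k*v)) by nra.
  assert (Hv : v <> 0).
  { intro h; subst v. assert (u - 1 = 0).
    { apply (Rmult_eq_reg_l r); [|lra]. rewrite F1. ring. }
    nra. }
  assert (F2 : v*(k^2*v + r^2*v - 2*k*r^2) = 0).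
  { replace (v*(k^2*v + r^2*v - 2*k*r^2)) with ((k*v)^2 - (r*(u-1))^2 + r^2*((u-1)^2+v^2-2*k*v)) by ring.
    rewrite E1, F1. ring. }
  assert (F3 : k^2*v + r^2*v - 2*k*r^2 = 0).
  { destruct (Rmult_integral _ _ F2); [contradiction|auto]. }
  assert (F4 : (1-s)*(NN s r * v - 2*D*r^2) = 0).
  { unfold NN. replace ((1 - s) * ((1 - s + r ^ 2 * (1 + s)) * v - 2 * D * r ^ 2))
      with ((k*D)^2*v + r^2*(1 - s^2)*v - 2*(k*D)*D*r^2) by (rewrite HkD; ring).
    replace (1 - s^2) with (D^2) by lra.
    replace ((k * D) ^ 2 * v + r ^ 2 * D ^ 2 * v - 2 * (k * D) * D * r ^ 2) with (D^2*(k^2*v + r^2*v - 2*k*r^2)) by ring.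
    rewrite F3. ring. }
  assert (F5 : NN s r * v = 2*D*r^2).
  { destruct (Rmult_integral _ _ F4); lra. }
  assert (HD : D <> 0) by (intro h; subst D; lra).
  assert (F6 : r*D*(NN s r*(u-1) + 2*(1-s)*r) = 0).
  { replace (r*D*(NN s r*(u-1) + 2*(1-s)*r)) with (NN s r * (r*(u-1)) * D + (1-s)*(2*D*r^2)) by ring.
    rewrite F1, <- F5. replace (NN s r * - (k * v) * D + (1 - s) * (NN s r * v)) with (NN s r * v * ((1-s) - k*D)) by ring.
    rewrite HkD. ring. }
  assert (F7 : NN s r*(u-1) + 2*(1-s)*r = 0).
  { destruct (Rmult_integral _ _ F6) as [h|h]; auto. destruct (Rmult_integral _ _ h); lra. }
  unfold UU, WW. split.
  - apply (Rmult_eq_reg_l (NN s r)); [|lra]. field_simplify; lra.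
  - apply (Rmult_eq_reg_l (NN s r)); [|lra]. field_simplify; lra.
Qed.

Lemma circ_id s r : -1 <= s < 1 -> (UU s r - (1-r))^2 + (1-s^2)*(WW s r)^2 = r^2.
Proof. intros. pose proof (NN_pos s r H). unfold UU, WW in *. unfold NN in *. field. lra. Qed.

Lemma geo_id s r : -1 <= s < 1 -> (UU s r - 1)^2 + (1-s^2)*(WW s r)^2 - 2*(1-s)*WW s r = 0.
Proof. intros. pose proof (NN_pos s r H). unfold UU, WW in *. unfold NN in *. field. lra. Qed.

Definition geopt a1 a2 s D r : pt :=
  (UU s r * a1 - D*WW s r * a2, UU s r * a2 + D * WW s r * a1).

Lemma geo_unique a1 a2 b1 b2 s D r x : a1^2+a2^2=1 -> b1^2+b2^2=1 ->
  s = a1*b1+a2*b2 -> D = a1*b2-a2*b1 -> s < 1 -> 0<r<1 ->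
  on_circle ((1-r)*a1,(1-r)*a2) r x -> on_geodesic (a1,a2) (b1,b2) x -> x = geopt a1 a2 s D r.
Proof.
  intros Ha Hb Hs HD Hs1 Hr Hc [Hx Hg].
  assert (HsD : s^2 + D^2 = 1).
  { transitivity ((a1^2+a2^2)*(b1^2+b2^2)); [subst; ring| rewrite Ha, Hb; ring]. }
  destruct x as [x1 x2].
  assert (exists u v, x1 = u*a1 - v*a2 /\ x2 = u*a2 + v*a1) as [u [v [E1 E2]]].
  { exists (x1*a1+x2*a2), (-x1*a2+x2*a1). split.
    - transitivity (x1*(a1^2+a2^2)); [rewrite Ha; ring| ring].
    - transitivity (x2*(a1^2+a2^2)); [rewrite Ha; ring| ring]. }
  subst x1 x2.
  apply circ_sq in Hc; cbn [fst snd] in Hc.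
  assert (C1 : (u-(1-r))^2+v^2 = r^2).
  { rewrite <- Hc. transitivity (((u-(1-r))^2+v^2)*(a1^2+a2^2)); [rewrite Ha; ring|ring]. }
  unfold dot in Hx; cbn [fst snd] in Hx.
  assert (C2 : u^2+v^2 < 1).
  { replace (u^2+v^2) with ((u^2+v^2)*(a1^2+a2^2)) by (rewrite Ha; ring). nra. }
  destruct Hg as [[[k1 k2] [G1 [G2 G3]]] | [G1 [G2 G3]]].
  - assert (G1' := f_equal (fun t => t^2) G1). cbv beta in G1'.
    assert (G3' := f_equal (fun t => t^2) G3). cbv beta in G3'.
    repeat rewrite edist_sq in G1'. repeat rewrite edist_sq in G3'. repeat rewrite edist_sq in G2. unfold dot in G2. cbn [fst snd] in *.
    assert (KA : k1*a1+k2*a2 = 1) by nra.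
    assert (exists k, k1 = a1 - k*a2 /\ k2 = a2 + k*a1) as [k [K1 K2]].
    { exists (-k1*a2+k2*a1). split.
      - transitivity (k1*(a1^2+a2^2) + (1 - (k1*a1+k2*a2))*a1); [rewrite Ha, KA; ring| ring].
      - transitivity (k2*(a1^2+a2^2) + (1 - (k1*a1+k2*a2))*a2); [rewrite Ha, KA; ring| ring]. }
    subst k1 k2.
    assert (KB : k*D = 1 - s).
    { assert ((a1 - k*a2)*b1 + (a2 + k*a1)*b2 = 1) by lra. subst s D. lra. }
    assert (X : (u-1)^2+v^2-2*k*v = 0).
    { assert (R1 : (a1 - k * a2 - a1) ^ 2 + (a2 + k * a1 - a2) ^ 2 = k^2) by
        (transitivity (k^2*(a1^2+a2^2)); [ring| rewrite Ha; ring]).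
      assert (R2 : (u * a1 - v * a2 - (a1 - k * a2)) ^ 2 + (u * a2 + v * a1 - (a2 + k * a1)) ^ 2
                   = (u-1)^2 + (v-k)^2) by
        (transitivity (((u-1)^2 + (v-k)^2)*(a1^2+a2^2)); [ring| rewrite Ha; ring]).
      rewrite R1, R2 in G3'. lra. }
    destruct (alg1 s D r u v k HsD Hs1 Hr KB X C1 C2) as [-> ->].
    unfold geopt. f_equal; ring.
  - unfold det2 in G3; cbn [fst snd] in *.
    assert (Hv : v = 0).
    { replace v with (-((u * a1 - v * a2) * a2 - (u * a2 + v * a1) * a1)) by (transitivity (v*(a1^2+a2^2)); first [ring | rewrite Ha; ring]).
      rewrite G3. ring. }
    assert (HD0 : D = 0) by (subst D; replace b1 with (-a1) by lra; replace b2 with (-a2) by lra; ring).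
    assert (Hsm : s = -1) by (subst s; replace b1 with (-a1) by lra; replace b2 with (-a2) by lra; lra).
    subst v. assert (Hu : u = 1 - 2*r).
    { assert ((u-1)*(u-(1-2*r)) = 0) by nra. destruct (Rmult_integral _ _ H); nra. }
    unfold geopt, UU, WW, NN. rewrite HD0, Hsm, Hu. f_equal; field.
Qed.

Lemma geo_exists a1 a2 b1 b2 s D r : a1^2+a2^2=1 -> b1^2+b2^2=1 ->
  s = a1*b1+a2*b2 -> D = a1*b2-a2*b1 -> s < 1 -> 0<r<1 ->
  on_circle ((1-r)*a1,(1-r)*a2) r (geopt a1 a2 s D r) /\ on_geodesic (a1,a2) (b1,b2) (geopt a1 a2 s D r).
Proof.
  intros Ha Hb Hs HD Hs1 Hr.
  assert (HsD : s^2 + D^2 = 1).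
  { transitivity ((a1^2+a2^2)*(b1^2+b2^2)); [subst; ring| rewrite Ha, Hb; ring]. }
  assert (Hsm : -1 <= s) by nra.
  pose proof (one_minus s r (conj Hsm Hs1)) as OM.
  pose proof (circ_id s r (conj Hsm Hs1)) as CI.
  pose proof (geo_id s r (conj Hsm Hs1)) as GI.
  pose proof (NN_pos s r (conj Hsm Hs1)) as HN.
  replace (1 - s^2) with (D^2) in OM, CI, GI by lra.
  unfold geopt. set (U := UU s r) in *. set (W := WW s r) in *.
  assert (Hpos : 0 < 4 * (1 - s) * r * (1 - r) / NN s r).
  { apply Rdiv_lt_0_compat; auto. apply Rmult_lt_0_compat; [|lra]. apply Rmult_lt_0_compat; lra. }
  split; [|split].
  - apply circ_of_sq; [lra|]; cbn [fst snd]. rewrite <- CI.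
    transitivity (((U - (1-r))^2 + D^2*W^2)*(a1^2+a2^2)); [ring| rewrite Ha; ring].
  - unfold dot; cbn [fst snd].
    replace ((U * a1 - D * W * a2) * (U * a1 - D * W * a2) + (U * a2 + D * W * a1) * (U * a2 + D * W * a1))
      with ((U^2 + D^2*W^2)*(a1^2+a2^2)) by ring. rewrite Ha. lra.
  - destruct (Req_dec D 0) as [D0|D0].
    + right. unfold det2; cbn [fst snd].
      assert (Hs' : s = -1) by nra.
      assert (E1 : b1 = s*a1 - D*a2) by (transitivity (b1*(a1^2+a2^2)); [rewrite Ha; ring| subst; ring]).
      assert (E2 : b2 = s*a2 + D*a1) by (transitivity (b2*(a1^2+a2^2)); [rewrite Ha; ring| subst; ring]).
      rewrite D0, Hs' in E1, E2. rewrite D0. split; [|split]; [lra|lra|ring].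
    + left. set (k := (1-s)/D).
      assert (Hk : k*D = 1-s) by (unfold k; field; auto).
      assert (CB : (a1 - k*a2)*b1 + (a2 + k*a1)*b2 = 1).
      { replace ((a1 - k*a2)*b1 + (a2 + k*a1)*b2) with (s + k*D) by (subst; ring). lra. }
      exists (a1 - k*a2, a2 + k*a1).
      assert (RA : edist (a1 - k*a2, a2 + k*a1) (a1,a2) ^ 2 = k^2).
      { rewrite edist_sq; cbn [fst snd]. transitivity (k^2*(a1^2+a2^2)); [ring| rewrite Ha; ring]. }
      assert (RB : edist (a1 - k*a2, a2 + k*a1) (b1,b2) ^ 2 = k^2).
      { rewrite edist_sq; cbn [fst snd].
        transitivity ((1+k^2)*(a1^2+a2^2) - 2*((a1 - k*a2)*b1 + (a2 + k*a1)*b2) + (b1^2+b2^2)); [ring|].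
        rewrite Ha, Hb, CB. ring. }
      assert (RX : edist (U * a1 - D * W * a2, U * a2 + D * W * a1) (a1 - k*a2, a2 + k*a1) ^ 2 = k^2).
      { rewrite edist_sq; cbn [fst snd].
        transitivity (((U-1)^2 + (D*W - k)^2)*(a1^2+a2^2)); [ring| rewrite Ha].
        replace ((U - 1) ^ 2 + (D * W - k) ^ 2) with ((U - 1) ^ 2 + D^2*W^2 - 2*(k*D)*W + k^2) by ring.
        rewrite Hk. lra. }
      assert (sq_eq : forall p q, edist p q ^ 2 = k^2 -> edist p q = Rabs k).
      { intros p q H. rewrite <- (sqrt_pow2 (edist p q)) by apply edist_nonneg. rewrite H.
        rewrite <- sqrt_Rsqr_abs. unfold Rsqr. f_equal; ring. }
      split; [|split].
      * rewrite (sq_eq _ _ RA), (sq_eq _ _ RB). reflexivity.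
      * unfold dot; cbn [fst snd]. rewrite RA.
        transitivity ((1+k^2)*(a1^2+a2^2)); [ring| rewrite Ha; ring].
      * rewrite (sq_eq _ _ RA), (sq_eq _ _ RX). reflexivity.
Qed.

Lemma geo_sym a1 a2 b1 b2 x : on_geodesic (a1,a2) (b1,b2) x -> on_geodesic (b1,b2) (a1,a2) x.
Proof.
  intros [Hx [[c [G1 [G2 G3]]] | [G1 [G2 G3]]]]; split; auto.
  - left. exists c. rewrite <- G1. auto.
  - right. destruct x as [x1 x2]. unfold det2 in *; cbn [fst snd] in *.
    split; [lra|split;[lra|]]. replace b1 with (-a1) by lra. replace b2 with (-a2) by lra. lra.
Qed.

Lemma arcosh_L L : 1 <= L -> arcosh ((L + /L)/2) = ln L.
Proof.
  intros HL. unfold arcosh. f_equal.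
  assert (0 < L) by lra.
  assert (HiL : /L <= 1). { rewrite <- Rinv_1. apply Rinv_le_contravar; lra. }
  replace (((L + / L) / 2) ^ 2 - 1) with (((L - /L)/2)^2) by (field; lra).
  rewrite sqrt_pow2 by lra. field. lra.
Qed.

Lemma hdist_val a1 a2 b1 b2 s D ri rj : a1^2+a2^2=1 -> b1^2+b2^2=1 ->
  s = a1*b1+a2*b2 -> D = a1*b2-a2*b1 -> s < 1 -> 0<ri<1 -> 0<rj<1 ->
  1 <= (1-ri)*(1-rj)*(1-s)/(2*ri*rj) ->
  hdist (geopt a1 a2 s D ri) (geopt b1 b2 s (-D) rj) = ln ((1-ri)*(1-rj)*(1-s)/(2*ri*rj)).
Proof.
  intros Ha Hb Hs HD Hs1 Hri Hrj HL.
  assert (HsD : s^2 + D^2 = 1).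
  { transitivity ((a1^2+a2^2)*(b1^2+b2^2)); [subst; ring| rewrite Ha, Hb; ring]. }
  assert (Hsm : -1 <= s) by nra.
  pose proof (one_minus s ri (conj Hsm Hs1)) as OMi.
  pose proof (one_minus s rj (conj Hsm Hs1)) as OMj.
  pose proof (dist_id s ri rj (conj Hsm Hs1)) as DI.
  pose proof (NN_pos s ri (conj Hsm Hs1)) as HNi.
  pose proof (NN_pos s rj (conj Hsm Hs1)) as HNj.
  replace (1 - s^2) with (D^2) in OMi, OMj, DI by lra.
  unfold hdist, geopt.
  set (Ui := UU s ri) in *. set (Wi := WW s ri) in *. set (Uj := UU s rj) in *. set (Wj := WW s rj) in *.
  assert (Xx : dot (Ui * a1 - D * Wi * a2, Ui * a2 + D * Wi * a1) (Ui * a1 - D * Wi * a2, Ui * a2 + D * Wi * a1) = Ui^2 + D^2*Wi^2).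
  { unfold dot; cbn [fst snd]. transitivity ((Ui^2 + D^2*Wi^2)*(a1^2+a2^2)); [ring| rewrite Ha; ring]. }
  assert (Yy : dot (Uj * b1 - - D * Wj * b2, Uj * b2 + - D * Wj * b1) (Uj * b1 - - D * Wj * b2, Uj * b2 + - D * Wj * b1) = Uj^2 + D^2*Wj^2).
  { unfold dot; cbn [fst snd]. transitivity ((Uj^2 + D^2*Wj^2)*(b1^2+b2^2)); [ring| rewrite Hb; ring]. }
  assert (XY : edist (Ui * a1 - D * Wi * a2, Ui * a2 + D * Wi * a1) (Uj * b1 - - D * Wj * b2, Uj * b2 + - D * Wj * b1) ^ 2
     = (Ui - Uj * s - D^2 * Wj)^2 + D^2 * (Wi - Uj + Wj * s)^2).
  { rewrite edist_sq; cbn [fst snd].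
    transitivity (((Ui * a1 - D * Wi * a2 - (Uj * b1 - - D * Wj * b2)) ^ 2 + (Ui * a2 + D * Wi * a1 - (Uj * b2 + - D * Wj * b1)) ^ 2)*(a1^2+a2^2)); [rewrite Ha; ring|].
    transitivity ((Ui*(a1^2+a2^2) - Uj*s - D^2*Wj)^2 + (D*Wi*(a1^2+a2^2) - Uj*D + D*Wj*s)^2); [subst s D; ring| rewrite Ha; ring]. }
  rewrite Xx, Yy, XY, DI.
  replace (1 - (Ui^2 + D^2*Wi^2)) with (1 - Ui ^ 2 - D ^ 2 * Wi ^ 2) by ring.
  replace (1 - (Uj^2 + D^2*Wj^2)) with (1 - Uj ^ 2 - D ^ 2 * Wj ^ 2) by ring.
  rewrite OMi, OMj.
  rewrite <- arcosh_L by auto. f_equal.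
  field. repeat split; lra.
Qed.

Lemma sqeq a b : 0 <= a -> 0 <= b -> a^2 = b^2 -> a = b.
Proof. intros. assert ((a-b)*(a+b) = 0) by nra. destruct (Rmult_integral _ _ H2); lra. Qed.

Theorem proposition1 (alpha r : nat -> R) (c : nat -> pt) :
  0 <= alpha 1%nat -> alpha 1%nat < alpha 2%nat -> alpha 2%nat < alpha 3%nat ->
  alpha 3%nat < alpha 4%nat -> alpha 4%nat < PI ->
  (forall i : nat, (1 <= i <= 4)%nat ->
     0 < r i < 1 /\
     (forall p, on_circle (c i) (r i) p -> norm p <= 1) /\
     on_circle (c i) (r i) (idealpt (alpha i))) ->
  (forall i j : nat, (1 <= i <= 4)%nat -> (1 <= j <= 4)%nat -> i <> j ->
     ~ (exists p, on_circle (c i) (r i) p /\ on_circle (c j) (r j) p)) ->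
  forall i j : nat, (1 <= i)%nat -> (i < j)%nat -> (j <= 4)%nat ->
    let A_i := idealpt (alpha i) in
    let A_j := idealpt (alpha j) in
    let d := edist A_i A_j in
    let P := cos (alpha i) * sin (alpha j) - cos (alpha j) * sin (alpha i) in
    (exists p q, ext_tangent_pts (c i) (r i) (c j) (r j) p q) /\
    (exists x y, on_circle (c i) (r i) x /\ on_geodesic A_i A_j x /\
                 on_circle (c j) (r j) y /\ on_geodesic A_i A_j y) /\
    (forall p q x y,
       ext_tangent_pts (c i) (r i) (c j) (r j) p q ->
       on_circle (c i) (r i) x -> on_geodesic A_i A_j x ->
       on_circle (c j) (r j) y -> on_geodesic A_i A_j y ->
       edist p q = sqrt (1 - r i) * sqrt (1 - r j) * d /\
       edist p q = exp (hdist x y / 2) * sqrt (2 * r i) * sqrt (2 * r j)) /\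
    d = 2 * P.
Proof.
  intros H0 H12 H23 H34 H4 Hc Hdisj i j Hi Hij Hj.
  cbv zeta.
  assert (Hord : 0 <= alpha i /\ alpha i < alpha j /\ alpha j < PI).
  { assert (i = 1 \/ i = 2 \/ i = 3)%nat as Hi' by lia. assert (j = 2 \/ j = 3 \/ j = 4)%nat as Hj' by lia.
    destruct Hi' as [ -> | [ -> | -> ] ]; destruct Hj' as [ -> | [ -> | -> ] ]; try (exfalso; lia); lra. }
  destruct Hord as [Hai [Haij Haj]].
  destruct (Hc i ltac:(lia)) as [Hri [Hini Honi]].
  destruct (Hc j ltac:(lia)) as [Hrj [Hinj Honj]].
  assert (Hnd := Hdisj i j ltac:(lia) ltac:(lia) ltac:(lia)).
  clear Hc Hdisj.
  set (ai := alpha i) in *. set (aj := alpha j) in *. set (ri := r i) in *. set (rj := r j) in *.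
  unfold idealpt in *. rewrite !cos_2a, !sin_2a in *.
  pose proof (sin2_cos2 ai) as Ti. pose proof (sin2_cos2 aj) as Tj. unfold Rsqr in Ti, Tj.
  set (P := cos ai * sin aj - cos aj * sin ai).
  assert (HP : 0 < P).
  { unfold P. replace (cos ai * sin aj - cos aj * sin ai) with (sin (aj - ai)) by (rewrite sin_minus; ring).
    apply sin_gt_0; lra. }
  set (a1 := cos ai * cos ai - sin ai * sin ai) in *.
  set (a2 := 2 * sin ai * cos ai) in *.
  set (b1 := cos aj * cos aj - sin aj * sin aj) in *.
  set (b2 := 2 * sin aj * cos aj) in *.
  assert (Ha : a1^2 + a2^2 = 1).
  { transitivity ((sin ai * sin ai + cos ai * cos ai)^2); [unfold a1, a2; ring| rewrite Ti; ring]. }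
  assert (Hb : b1^2 + b2^2 = 1).
  { transitivity ((sin aj * sin aj + cos aj * cos aj)^2); [unfold b1, b2; ring| rewrite Tj; ring]. }
  set (s := a1*b1+a2*b2).
  set (D := a1*b2-a2*b1).
  assert (Hs : s = 1 - 2*P^2).
  { transitivity ((cos ai * cos aj + sin ai * sin aj)^2 - P^2); [unfold s, a1, a2, b1, b2, P; ring|].
    assert ((cos ai * cos aj + sin ai * sin aj)^2 + P^2 = 1).
    { transitivity ((sin ai * sin ai + cos ai * cos ai)*(sin aj * sin aj + cos aj * cos aj)); [unfold P; ring| rewrite Ti, Tj; ring]. }
    lra. }
  assert (Hs1 : s < 1) by nra.
  assert (Hd2 : edist (a1,a2) (b1,b2) ^ 2 = 2 - 2*s).
  { rewrite edist_sq; cbn [fst snd]. transitivity ((a1^2+a2^2) + (b1^2+b2^2) - 2*s); [unfold s; ring| rewrite Ha, Hb; ring]. }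
  assert (Hd : edist (a1,a2) (b1,b2) = 2*P).
  { apply sqeq; [apply edist_nonneg| lra| rewrite Hd2, Hs; ring]. }
  destruct (c i) as [ci1 ci2] eqn:Eci. destruct (c j) as [cj1 cj2] eqn:Ecj.
  destruct (center a1 a2 ri ci1 ci2 Ha Hri Hini Honi) as [-> ->].
  destruct (center b1 b2 rj cj1 cj2 Hb Hrj Hinj Honj) as [-> ->].
  clear Hini Hinj Eci Ecj.
  assert (HL : edist ((1-ri)*a1, (1-ri)*a2) ((1-rj)*b1, (1-rj)*b2) ^ 2 = (ri - rj)^2 + (1-ri)*(1-rj)*(2-2*s)).
  { rewrite edist_sq; cbn [fst snd].
    transitivity ((1-ri)^2*(a1^2+a2^2) + (1-rj)^2*(b1^2+b2^2) - 2*(1-ri)*(1-rj)*s); [unfold s; ring| rewrite Ha, Hb; ring]. }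
  assert (Hpos : 0 < (1-ri)*(1-rj)*(2-2*s)).
  { apply Rmult_lt_0_compat; [apply Rmult_lt_0_compat|]; lra. }
  assert (Hsep : 4*ri*rj < (1-ri)*(1-rj)*(2-2*s)).
  { destruct (Rle_lt_dec ((1-ri)*(1-rj)*(2-2*s)) (4*ri*rj)) as [h|h]; auto.
    exfalso. apply Hnd. apply circles_meet; rewrite ?HL; try lra; pose proof (pow2_ge_0 (ri-rj)); nra. }
  assert (HLam : 1 <= (1-ri)*(1-rj)*(1-s)/(2*ri*rj)).
  { apply (Rmult_le_reg_r (2*ri*rj)); [nra|]. field_simplify; nra. }
  assert (Hsb : s = b1*a1+b2*a2) by (unfold s; ring).
  assert (HDb : -D = b1*a2-b2*a1) by (unfold D; ring).
  split; [|split; [|split]].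
  - apply tangent_exists; rewrite ?HL; pose proof (pow2_ge_0 (ri-rj)); lra.
  - destruct (geo_exists a1 a2 b1 b2 s D ri Ha Hb eq_refl eq_refl Hs1 Hri) as [X1 X2].
    destruct (geo_exists b1 b2 a1 a2 s (-D) rj Hb Ha Hsb HDb Hs1 Hrj) as [Y1 Y2].
    exists (geopt a1 a2 s D ri), (geopt b1 b2 s (-D) rj).
    split; [|split; [|split]]; auto. apply geo_sym; auto.
  - intros p q x y Hpq Hx1 Hx2 Hy1 Hy2.
    pose proof (tangent_len _ ri _ rj p q ltac:(lra) ltac:(lra) Hpq) as TL.
    rewrite HL in TL.
    assert (TL2 : edist p q ^ 2 = (1-ri)*(1-rj)*(2-2*s)) by (rewrite TL; ring).
    pose proof (geo_unique a1 a2 b1 b2 s D ri x Ha Hb eq_refl eq_refl Hs1 Hri Hx1 Hx2) as ->.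
    pose proof (geo_unique b1 b2 a1 a2 s (-D) rj y Hb Ha Hsb HDb Hs1 Hrj Hy1 (geo_sym _ _ _ _ _ Hy2)) as ->.
    rewrite (hdist_val a1 a2 b1 b2 s D ri rj Ha Hb eq_refl eq_refl Hs1 Hri Hrj HLam).
    split.
    + apply sqeq; [apply edist_nonneg| |].
      * rewrite Hd. apply Rmult_le_pos; [apply Rmult_le_pos; apply sqrt_pos| lra].
      * rewrite TL2, Hd. rewrite !Rpow_mult_distr, !pow2_sqrt by lra.
        rewrite Hs; ring.
    + apply sqeq; [apply edist_nonneg| |].
      * apply Rmult_le_pos; [apply Rmult_le_pos; [left; apply exp_pos| apply sqrt_pos]| apply sqrt_pos].
      * rewrite TL2. rewrite !Rpow_mult_distr, !pow2_sqrt by lra.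
        set (Lm := (1 - ri) * (1 - rj) * (1 - s) / (2 * ri * rj)).
        replace (exp (ln Lm / 2) ^ 2) with Lm.
        -- unfold Lm. field. lra.
        -- replace (exp (ln Lm / 2) ^ 2) with (exp (ln Lm / 2 + ln Lm / 2)) by (rewrite exp_plus; ring).
           replace (ln Lm / 2 + ln Lm / 2) with (ln Lm) by field. rewrite exp_ln; auto. unfold Lm; lra.
  - exact Hd.
Qed.
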